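(* The action of $G=\mathrm{SL}_n(\mathbb C)$ on $\mathring X_{u,\beta}$ by simultaneous left multiplication on all weighted flags is free.
   Context: $G=\mathrm{SL}_n(\mathbb C)$, $B_+$ upper triangular, $U_+$ upper unitriangular matrices; $I=\{1,\dots,n-1\}$, $\pm I=I\sqcup(-I)$; $i^*=n-i$, $(-i)^*=-i^*$; $w_0$ longest element of $S_n$. $\phi_i:\mathrm{SL}_2\to G$ places a $2\times2$ block in rows/columns $i,i+1$; $\dot s_i=\phi_i\begin{pmatrix}0&-1\\1&0\end{pmatrix}$, $\dot w=\dot s_{j_1}\cdots\dot s_{j_l}$ for a reduced word of $w$. Weighted flags: elements of $G/U_+$. For $F=g_1U_+$, $F'=g_2U_+$: $F\xrightarrow{w}F'$ (strictly $w$-related) if $g_1^{-1}g_2\in U_+\dot wU_+$; $F\Rightarrow^{w}F'$ (weakly) if $g_1^{-1}g_2\in B_+\dot wB_+$. For $i\in\pm I$: $s_i^+=s_i,s_i^-=\mathrm{id}$ if $i>0$; $s_i^+=\mathrm{id},s_i^-=s_{-i}$ if $i<0$. Double braid word $\beta=(i_1,\dots,i_m)\in(\pm I)^m$, $u\in S_n$ with $u\le\beta$ (i.e. $u\le s^-_{i_m}*\cdots*s^-_{i_1}*s^+_{i_1}*\dots*s^+_{i_m}$ in Bruhat order, $*$ the Demazure product). $\mathring X_{u,\beta}$ is the variety of tuples $(X_0,\dots,X_m,Y_0,\dots,Y_m)$ of weighted flags with $X_c\xrightarrow{s^+_{i_c}}X_{c-1}$ and $Y_{c-1}\xrightarrow{s^-_{i_c^*}}Y_c$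 for $c\in[m]$ (strict $\mathrm{id}$-relation means equality), $Y_m\xrightarrow{w_0u}X_m$, and $Y_0\Rightarrow^{w_0}X_0$. *)

(* Defs.v *)
From HB Require Import structures.
From mathcomp Require Import all_boot all_order all_algebra all_fingroup.
From mathcomp Require Import reals complex.
From Stdlib Require Import Relations.
Set Implicit Arguments. Unset Strict Implicit. Unset Printing Implicit Defensive.
Import Order.TTheory GRing.Theory Num.Theory.
Local Open Scope ring_scope.

Section Defs.
Variable n : nat.

(* usual composition (u o v)(x) = u (v x); note mathcomp's (v * u)%g x = u (v x) *)
Definition pcomp (u v : 'S_n) : 'S_n := (v * u)%g.

(* simple transposition s_i (i in I = {1..n-1}) swapping positions i and i+1,
   i.e. 0-indexed positions i-1 and i. *)
Definition sperm (i : nat) : 'S_n :=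
  match (insub i.-1 : option 'I_n), (insub i : option 'I_n) with
  | Some a, Some b => tperm a b
  | _, _ => 1%g
  end.

(* s for "simple reflection or identity": None = id, Some i = s_i *)
Definition operm (x : option nat) : 'S_n :=
  if x is Some i then sperm i else 1%g.

Definition plength (w : 'S_n) : nat :=
  #|[set p : 'I_n * 'I_n | (p.1 < p.2)%N && (w p.2 < w p.1)%N]|.

Definition w0 : 'S_n := perm (@rev_ord_inj n).

Definition bruhat_step (u v : 'S_n) : Prop :=
  exists x y : 'I_n, x != y /\ v = pcomp u (tperm x y) /\ (plength u < plength v)%N.
Definition bruhat_le (u v : 'S_n) : Prop := clos_refl_trans _ bruhat_step u v.

Definition dem_mul (x : option nat) (w : 'S_n) : 'S_n :=
  if x is Some i then
    (if (plength w < plength (pcomp (sperm i) w))%N then pcomp (sperm i) w else w)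
  else w.

Definition in_pmI (i : int) : bool := (i != 0) && (`|i| <= n.-1)%N.

(* s_i^+ and s_i^- as "simple reflection or identity" *)
Definition splus (i : int) : option nat := if (0 < i) then Some `|i|%N else None.
Definition sminus (i : int) : option nat := if (i < 0) then Some `|i|%N else None.

Definition istar (i : int) : int :=
  if (0 < i) then ((n - `|i|)%N)%:Z else - ((n - `|i|)%N)%:Z.

(* s^-_{i_m} * ... * s^-_{i_1} * s^+_{i_1} * ... * s^+_{i_m}  (Demazure product) *)
Definition dem_beta (beta : seq int) : 'S_n :=
  foldr dem_mul 1%g (rev (map sminus beta) ++ map splus beta).

Definition word_perm (s : seq nat) : 'S_n := foldr (fun j w => pcomp (sperm j) w) 1%g s.
Definition reduced_word (w : 'S_n) (s : seq nat) : Prop :=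
  all (fun j => (0 < j <= n.-1)%N) s /\ word_perm s = w /\ size s = plength w.

Variable R : realType.
Notation C := (R[i]).

Definition inSL (g : 'M[C]_n) : Prop := \det g = 1.
Definition upper_uni (g : 'M[C]_n) : Prop :=
  forall a b : 'I_n, ((b < a)%N -> g a b = 0) /\ (a = b -> g a b = 1).
Definition inB (g : 'M[C]_n) : Prop :=
  (forall a b : 'I_n, (b < a)%N -> g a b = 0) /\ inSL g.

(* \dot s_i = phi_i [[0,-1],[1,0]] *)
Definition sdot (i : nat) : 'M[C]_n :=
  \matrix_(a, b)
    (if ((a == i.-1 :> nat) && (b == i :> nat)) then -1
     else if ((a == i :> nat) && (b == i.-1 :> nat)) then 1
     else if (a == b) && (a != i.-1 :> nat) && (a != i :> nat) then 1 else 0).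

Definition word_dot (s : seq nat) : 'M[C]_n := foldr (fun j M => sdot j *m M) 1%:M s.

(* Weighted flags are elements of G/U_+, represented by g in SL_n; g1 U_+ = g2 U_+
   iff g1^{-1} g2 in U_+. *)
Definition flag_eq (g1 g2 : 'M[C]_n) : Prop := upper_uni (invmx g1 *m g2).

(* strictly w-related: g1^{-1} g2 in U_+ \dot w U_+, \dot w from a reduced word
   (independent of the reduced word). *)
Definition strict_rel (w : 'S_n) (g1 g2 : 'M[C]_n) : Prop :=
  exists s, reduced_word w s /\
  exists u1 u2, upper_uni u1 /\ upper_uni u2 /\
    invmx g1 *m g2 = u1 *m word_dot s *m u2.

Definition weak_rel (w : 'S_n) (g1 g2 : 'M[C]_n) : Prop :=
  exists s, reduced_word w s /\
  exists b1 b2, inB b1 /\ inB b2 /\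
    invmx g1 *m g2 = b1 *m word_dot s *m b2.

(* The braid variety \mathring X_{u,beta}: tuples (X_0..X_m, Y_0..Y_m),
   m = size beta, i_c = nth 0 beta c.-1. *)
Definition in_Xring (u : 'S_n) (beta : seq int) (X Y : nat -> 'M[C]_n) : Prop :=
  let m := size beta in
  (forall c, (c <= m)%N -> inSL (X c) /\ inSL (Y c)) /\
  (forall c, (1 <= c <= m)%N ->
     strict_rel (operm (splus (nth 0 beta c.-1))) (X c) (X c.-1) /\
     strict_rel (operm (sminus (istar (nth 0 beta c.-1)))) (Y c.-1) (Y c)) /\
  strict_rel (pcomp w0 u) (Y m) (X m) /\
  weak_rel w0 (Y 0%N) (X 0%N).

End Defs.

(* Main.v *)
Require Import Defs.
From HB Require Import structures.
From mathcomp Require Import all_boot all_order all_algebra all_fingroup.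
From mathcomp Require Import reals complex.
From mathcomp Require Import zify.
Import Order.TTheory GRing.Theory Num.Theory.
Local Open Scope ring_scope.
Set Implicit Arguments. Unset Strict Implicit.

Section Aux.
Variable F : fieldType.
Variable n : nat.

Definition up (M : 'M[F]_n) := forall a b : 'I_n, (b < a)%N -> M a b = 0.

Lemma up_mul M N : up M -> up N -> up (M *m N) /\ forall a, (M *m N) a a = M a a * N a a.
Proof.
move=> hM hN; split.
  move=> a b ba; rewrite mxE big1 // => k _.
  case: (ltnP k a) => ka; first by rewrite hM // mul0r.
  by rewrite hN ?mulr0 // (leq_trans ba ka).
move=> a; rewrite mxE (bigD1 a) //= big1 ?addr0 // => k ka.
case: (ltngtP k a) => kk; first by rewrite hM // mul0r.
  by rewrite hN ?mulr0.
by move: ka; rewrite (ord_inj kk) eqxx.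
Qed.

Lemma up_inv M : up M -> (forall j, M j j != 0) -> M \in unitmx -> up (invmx M).
Proof.
move=> hM hd hu.
suff H : forall k (j : 'I_n), (j : nat) = k -> forall i : 'I_n, (j < i)%N -> invmx M i j = 0.
  by move=> a b ba; exact: H _ _ erefl _ ba.
elim/ltn_ind => k IH j jk i ji.
have e : (invmx M *m M) i j = 0.
  by rewrite mulVmx // mxE; case: eqP => // ij; rewrite ij ltnn in ji.
move: e; rewrite mxE (bigD1 j) //= big1 ?addr0.
  by move/eqP; rewrite mulf_eq0 (negbTE (hd j)) orbF => /eqP.
move=> l lj; case: (ltngtP l j) => ll.
- have lk : (l < k)%N by rewrite -jk.
  by rewrite (IH l lk l erefl) ?mul0r // (ltn_trans ll ji).
- by rewrite hM ?mulr0.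
- by move: lj; rewrite (ord_inj ll) eqxx.
Qed.

Definition mono (D : 'M[F]_n) (p : 'S_n) := forall a b, (D a b != 0) = (a == p b).

Lemma mono_mull D p (W : 'M[F]_n) a b : mono D p ->
  (D *m W) a b = D a ((p^-1)%g a) * W ((p^-1)%g a) b.
Proof.
move=> hD; rewrite mxE (bigD1 ((p^-1)%g a)) //= big1 ?addr0 // => k ka.
have : ~~ (D a k != 0) by rewrite hD; apply: contra ka => /eqP ->; rewrite -permM mulgV perm1.
by rewrite negbK => /eqP ->; rewrite mul0r.
Qed.

Lemma mono_mulr D p (V : 'M[F]_n) a b : mono D p ->
  (V *m D) a b = V a (p b) * D (p b) b.
Proof.
move=> hD; rewrite mxE (bigD1 (p b)) //= big1 ?addr0 // => k ka.
have : ~~ (D k b != 0) by rewrite hD.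
by rewrite negbK => /eqP ->; rewrite mulr0.
Qed.

End Aux.

Lemma sperm_invol n j x : sperm n j (sperm n j x) = x.
Proof.
rewrite /sperm; case: (insub j.-1 : option 'I_n) => [a|]; case: (insub j : option 'I_n) => [b|] //=;
  by rewrite ?tpermK ?perm1.
Qed.

Lemma sperm_val n j (x : 'I_n) : (0 < j < n)%N ->
  nat_of_ord (sperm n j x) = if (x:nat) == j.-1 then j else if (x:nat) == j then j.-1 else x.
Proof.
move=> /andP[j0 jn]; rewrite /sperm.
case: insubP => [a _ ea|]; last by move/negP; case; apply: leq_ltn_trans jn; apply: leq_pred.
case: insubP => [b _ eb|]; last by rewrite jn.
case: tpermP => [->|->|xa xb]; first by rewrite ea eqxx.
  by rewrite eb eqxx; case: eqP => //; lia.
rewrite -ea -eb; case: eqP => [/val_inj//|_]; case: eqP => [/val_inj//|_] //.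
Qed.

Lemma sdot_nz (R : realType) n j a k : (0 < j < n)%N ->
  (sdot n R j a k != 0) = (k == sperm n j a).
Proof.
move=> hj; rewrite -val_eqE /= sperm_val // mxE.
have h1 : (-1 : R[i]) != 0 by rewrite oppr_eq0 oner_eq0.
case/andP: hj => j0 jn.
have jj : (j.-1 == j) = false by apply/eqP; lia.
case: (eqVneq (a : nat) j.-1) => [ea|ea] /=.
  case: (eqVneq (k : nat) j) => [kj|kj] /=; first by rewrite h1.
  by rewrite ea jj /= andbF eqxx.
case: (eqVneq (a : nat) j) => [aj|aj] /=.
  case: (eqVneq (k : nat) j.-1) => [kj'|kj'] /=; first by rewrite oner_eq0.
  by rewrite andbF eqxx.
rewrite andbT; case: (eqVneq a k) => [->|ak]; first by rewrite /= oner_eq0 eqxx.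
by rewrite /= eqxx; apply/esym/negP => /eqP ka; move: ak; rewrite -val_eqE /= ka eqxx.
Qed.

Lemma word_mono (R : realType) n s : all (fun j => (0 < j <= n.-1)%N) s ->
  mono (word_dot n R s) (word_perm n s).
Proof.
elim: s => [|j s IH] /=.
  by move=> _ a b; rewrite mxE perm1; case: (a == b); rewrite ?oner_eq0 ?eqxx.
case/andP=> hj hs a b.
have hj' : (0 < j < n)%N by case/andP: hj => ? ?; apply/andP; split => //; lia.
rewrite /pcomp permM -/(word_dot n R s).
have hD : mono (sdot n R j) (sperm n j).
  move=> x y; rewrite sdot_nz //; apply/eqP/eqP => [->|->]; by rewrite sperm_invol.
rewrite (mono_mull _ _ _ hD) mulf_eq0 negb_or.
have -> : ((sperm n j)^-1)%g a = sperm n j a.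
  by apply: (@perm_inj _ (sperm n j)); rewrite -permM mulVg perm1 sperm_invol.
rewrite hD sperm_invol eqxx /= (IH hs).
apply/eqP/eqP => [<-|->]; by rewrite sperm_invol.
Qed.

Unset Implicit Arguments.

Lemma w0_val n (x : 'I_n) : nat_of_ord (w0 n x) = (n - x.+1)%N.
Proof. by rewrite /w0 permE. Qed.

Lemma w0_invol n (x : 'I_n) : w0 n (w0 n x) = x.
Proof. by apply: val_inj; rewrite /= !w0_val; have := ltn_ord x; lia. Qed.

Lemma w0_inv n (x : 'I_n) : ((w0 n)^-1)%g x = w0 n x.
Proof. by apply: (@perm_inj _ (w0 n)); rewrite -permM mulVg perm1 w0_invol. Qed.

Section Main.
Variable R : realType.
Variable n : nat.
Notation C := (R[i]).

Lemma uu_up (g : 'M[C]_n) : upper_uni g -> up g /\ forall a, g a a = 1.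
Proof. by move=> hg; split => [a b ba|a]; [exact: (hg a b).1 | exact: (hg a a).2]. Qed.

Lemma inB_up (b : 'M[C]_n) : inB b -> [/\ up b, (forall j, b j j != 0) & b \in unitmx].
Proof.
move=> [hl hd]; split => //.
- move=> j; apply/negP => /eqP bj.
  have : \det b = 0.
    rewrite -det_tr det_trig; last by apply/is_trig_mxP => x y xy; rewrite mxE hl.
    by rewrite (bigD1 j) //= mxE bj mul0r.
  by rewrite /inSL in hd; rewrite hd => /eqP; rewrite oner_eq0.
- by rewrite unitmxE hd unitr1.
Qed.

Lemma key (D W V : 'M[C]_n) : mono D (w0 n) -> up W -> up V -> (forall a, V a a = 1) ->
  D *m W = V *m D -> V = 1%:M.
Proof.
move=> hD hW hV hVd e; apply/matrixP => a c; rewrite mxE.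
case: (ltngtP a c) => ac.
- have := congr1 (fun M : 'M[C]_n => M a (w0 n c)) e => /=.
  rewrite (mono_mull _ _ _ hD) (mono_mulr _ _ _ hD) w0_inv w0_invol.
  rewrite (hW (w0 n a)); last by rewrite !w0_val; have := ltn_ord c; lia.
  have/negbTE-> : a != c by rewrite -val_eqE /= ltn_eqF.
  rewrite mulr0 => /esym/eqP; rewrite mulf_eq0 => /orP[/eqP //|].
  by move=> /eqP h0; move: (hD c (w0 n c)); rewrite w0_invol eqxx h0 eqxx.
- have/negbTE-> : a != c by rewrite -val_eqE /= gtn_eqF.
  by rewrite hV.
- by rewrite (ord_inj ac) hVd eqxx.
Qed.
End Main.

Theorem proposition6p8 (R : realType) (n : nat) (u : 'S_n) (beta : seq int)
  (hbeta : all (in_pmI n) beta)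
  (hu : bruhat_le u (dem_beta n beta))
  (X Y : nat -> 'M[R[i]]_n)
  (hXY : in_Xring u beta X Y)
  (h : 'M[R[i]]_n) (hSL : inSL h)
  (hfix : forall c, (c <= size beta)%N ->
            flag_eq (h *m X c) (X c) /\ flag_eq (h *m Y c) (Y c)) :
  h = 1%:M.
Proof.
move: hXY => [hSLc [_ [_ [s [[hs [hws _]] [b1 [b2 [hb1 [hb2 hM]]]]]]]]].
have [hA hB] := hfix 0%N (leq0n _).
have [sX sY] := hSLc 0%N (leq0n _).
set Xo := X 0%N in hA hM sX; set Yo := Y 0%N in hB hM sY.
have uX : Xo \in unitmx by rewrite unitmxE sX unitr1.
have uY : Yo \in unitmx by rewrite unitmxE sY unitr1.
have uh : h \in unitmx by rewrite unitmxE hSL unitr1.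
have uhX : h *m Xo \in unitmx by rewrite unitmx_mul uh uX.
have uhY : h *m Yo \in unitmx by rewrite unitmx_mul uh uY.
set A := invmx (h *m Xo) *m Xo in hA.
set Bm := invmx (h *m Yo) *m Yo in hB.
set M := invmx Yo *m Xo in hM.
set D := word_dot n R s in hM.
have hD : mono D (w0 n) by rewrite -hws; exact: word_mono.
have eYM : Yo *m M = Xo by rewrite /M mulKVmx.
have eA : h *m Xo *m A = Xo by rewrite /A mulKVmx.
have eB : h *m Yo *m Bm = Yo by rewrite /Bm mulKVmx.
have e1 : (h *m Yo) *m (M *m A) = (h *m Yo) *m (Bm *m M).
  by rewrite mulmxA -(mulmxA h) eYM eA mulmxA eB eYM.
have e2 : M *m A = Bm *m M.
  by have := congr1 (mulmx (invmx (h *m Yo))) e1; rewrite !mulKmx.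
have [ub1 db1 iub1] := inB_up _ _ _ hb1.
have [ub2 db2 iub2] := inB_up _ _ _ hb2.
have [uA dA] := uu_up _ _ _ hA.
have [uB dB] := uu_up _ _ _ hB.
set W := b2 *m A *m invmx b2.
set V := invmx b1 *m Bm *m b1.
have e3 : D *m W = V *m D.
  have f1 : b1 *m (D *m W) = M *m A *m invmx b2 by rewrite /W hM !mulmxA.
  have f2 : b1 *m (V *m D) = Bm *m M *m invmx b2.
    by rewrite /V hM !mulmxA (mulmxV iub1) mul1mx (mulmxK iub2).
  have := congr1 (mulmx (invmx b1)) f1; rewrite (mulKmx iub1) => ->.
  by rewrite e2 -f2 (mulKmx iub1).
have hW : up W.
  rewrite /W; have [u1 _] := up_mul ub2 uA.
  have [u2 _] := up_mul u1 (up_inv ub2 db2 iub2); exact: u2.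
have [uV dV] : up V /\ forall a, V a a = 1.
  have [u1 d1] := up_mul (up_inv ub1 db1 iub1) uB.
  have [u2 d2] := up_mul u1 ub1.
  split => // a; rewrite d2 d1 dB mulr1.
  have [_ d3] := up_mul (up_inv ub1 db1 iub1) ub1.
  by rewrite -d3 (mulVmx iub1) mxE eqxx.
have eV := key _ _ _ _ _ hD hW uV dV e3.
have eBm : Bm = 1%:M.
  have : b1 *m V *m invmx b1 = Bm by rewrite /V !mulmxA (mulmxV iub1) mul1mx (mulmxK iub1).
  by rewrite eV mulmx1 (mulmxV iub1).
have : h *m Yo = Yo by rewrite -{2}eB eBm mulmx1.
move=> /(congr1 (mulmx^~ (invmx Yo))); by rewrite (mulmxK uY) (mulmxV uY).
Qed.
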